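(* Let $(A,d)$ be a $\mathbb{Z}/2$-graded $\Lambda$-algebra (not necessarily associative or commutative) with a differential $d$ satisfying the graded Leibniz rule, equipped with a map $\operatorname{val}:A\to\mathbb{R}\cup\{+\infty\}$ such that $\operatorname{val}^{-1}(+\infty)=\{0\}$ and for all $c\in\Lambda$, $x,y\in A$: $\operatorname{val}(x\cdot y)\ge\operatorname{val}(x)+\operatorname{val}(y)$, $\operatorname{val}(dx)\ge\operatorname{val}(x)$, $\operatorname{val}(cx)=\operatorname{val}(c)+\operatorname{val}(x)$, $\operatorname{val}(x+y)\ge\min\{\operatorname{val}(x),\operatorname{val}(y)\}$; assume $A$ is complete with respect to the non-Archimedean norm $e^{-\operatorname{val}}$. Let $a$ be a nonzero idempotent in the cohomology $H(A)$ (with its induced product). Then every closed element of degree $0$ of $A$ representing $a$ has non-positive valuation.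
   Context: $\Lambda$ is the Novikov field of series $\sum_{i\ge0}a_iT^{\lambda_i}$, $a_i\in\mathbb{Q}$, $\lambda_i\in\mathbb{R}$ strictly increasing to $+\infty$, with valuation $\operatorname{val}$ (smallest exponent with nonzero coefficient). *)

(* Defs.v *)
From HB Require Import structures.
From mathcomp Require Import all_boot all_order all_algebra.
From mathcomp Require Import all_classical all_reals.
From mathcomp Require Import ereal Rstruct.
From Stdlib Require Import Rdefinitions.
Set Implicit Arguments. Unset Strict Implicit. Unset Printing Implicit Defensive.
Import Order.TTheory GRing.Theory Num.Theory.
Local Open Scope classical_set_scope.
Local Open Scope ring_scope.

Notation RR := Rdefinitions.R.

(* An element sum_i a_i T^{lambda_i} is represented by its coefficient      *)
(* function f : R -> rat (f l = coefficient of T^l).  The Novikov condition *)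
(* (exponents strictly increasing to +oo) says that below every bound C     *)
(* only finitely many exponents carry a nonzero coefficient.               *)
Definition novikov (f : RR -> rat) : Prop :=
  forall C : RR, finite_set [set l | f l != 0 /\ l <= C].

Definition nov_add (f g : RR -> rat) : RR -> rat := fun l => f l + g l.
Definition nov_opp (f : RR -> rat) : RR -> rat := fun l => - f l.
Definition nov_zero : RR -> rat := fun _ => 0.
Definition nov_one : RR -> rat := fun l => if l == 0 then 1 else 0.
(* Cauchy product: coefficient of T^l is sum_{m} f m * g (l - m)
   (a finite sum for Novikov series). *)
Definition nov_mul (f g : RR -> rat) : RR -> rat :=
  fun l => \sum_(m \in [set: RR]) ((f m * g (l - m)) : rat).
Definition nov_val (f : RR -> rat) : \bar RR :=
  ereal_inf [set (l%:E) | l in [set l | f l != 0]].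

(* d : differential; hom b : the homogeneous elements of degree b         *)
(*   (false = degree 0, true = degree 1); vA : the valuation on A.         *)
Record cvdga (V : zmodType) (sc : (RR -> rat) -> V -> V) (mul : V -> V -> V)
    (d : V -> V) (hom : bool -> set V) (vA : V -> \bar RR) : Prop := {
  sc_addl : forall c c' x, novikov c -> novikov c' ->
              sc (nov_add c c') x = sc c x + sc c' x;
  sc_addr : forall c x y, novikov c -> sc c (x + y) = sc c x + sc c y;
  sc_mul  : forall c c' x, novikov c -> novikov c' ->
              sc (nov_mul c c') x = sc c (sc c' x);
  sc_one  : forall x, sc nov_one x = x;
  mul_addl : forall x y z, mul (x + y) z = mul x z + mul y z;
  mul_addr : forall x y z, mul x (y + z) = mul x y + mul x z;
  mul_scl  : forall c x y, novikov c -> mul (sc c x) y = sc c (mul x y);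
  mul_scr  : forall c x y, novikov c -> mul x (sc c y) = sc c (mul x y);
  hom0  : forall b, hom b 0;
  homD  : forall b x y, hom b x -> hom b y -> hom b (x - y);
  homZ  : forall b c x, novikov c -> hom b x -> hom b (sc c x);
  hom_decomp : forall x, exists x0 x1, hom false x0 /\ hom true x1 /\ x = x0 + x1;
  hom_disj : forall x, hom false x -> hom true x -> x = 0;
  hom_mul : forall i j x y, hom i x -> hom j y -> hom (i (+) j) (mul x y);
  d_add : forall x y, d (x + y) = d x + d y;
  d_sc  : forall c x, novikov c -> d (sc c x) = sc c (d x);
  d_hom : forall b x, hom b x -> hom (~~ b) (d x);
  d_d   : forall x, d (d x) = 0;
  d_leibniz : forall i x y, hom i x ->
      d (mul x y) = mul (d x) y + (if i then - mul x (d y) else mul x (d y));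
  vA_ninfty : forall x, vA x != -oo%E;
  vA_infty  : forall x, vA x = +oo%E <-> x = 0;
  vA_mul : forall x y, (vA x + vA y <= vA (mul x y))%E;
  vA_d   : forall x, (vA x <= vA (d x))%E;
  vA_sc  : forall c x, novikov c -> vA (sc c x) = (nov_val c + vA x)%E;
  vA_add : forall x y, (Order.min (vA x) (vA y) <= vA (x + y))%O;
  (* completeness for the non-Archimedean norm exp(- vA) *)
  vA_complete : forall u : nat -> V,
      (forall M : RR, exists N : nat, forall m n : nat, leq N m -> leq N n ->
          (M%:E <= vA (u m - u n))%O) ->
      exists l, forall M : RR, exists N : nat, forall n : nat, leq N n ->
          (M%:E <= vA (u n - l))%O
}.

Definition closed (V : zmodType) (d : V -> V) (x : V) : Prop := d x = 0.
Definition exact (V : zmodType) (d : V -> V) (x : V) : Prop := exists y, x = d y.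
(* the class [x] of a closed x is a nonzero idempotent of H(A):
   [x] <> 0 and [x][x] = [x x] = [x]. *)
Definition represents_nonzero_idempotent (V : zmodType) (mul : V -> V -> V)
    (d : V -> V) (x : V) : Prop :=
  closed d x /\ ~ exact d x /\ exact d (mul x x - x).

(* Main.v *)
Require Import Defs.
From mathcomp Require Import all_boot all_order all_algebra.
From mathcomp Require Import all_classical all_reals.
From mathcomp Require Import ereal Rstruct.
Import Order.TTheory GRing.Theory Num.Theory.
Local Open Scope classical_set_scope.
Local Open Scope ring_scope.

Lemma nov_one_nov : novikov nov_one.
Proof.
move=> C; apply: (sub_finite_set (B := [set (0:RR)])); last exact: finite_set1.
by move=> l [] /=; rewrite /nov_one; case: ifPn => [/eqP //|]; rewrite eqxx.
Qed.

Lemma nov_mone_nov : novikov (nov_opp nov_one).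
Proof.
move=> C; apply: (sub_finite_set (B := [set (0:RR)])); last exact: finite_set1.
by move=> l [] /=; rewrite /nov_opp /nov_one; case: ifPn => [/eqP //|]; rewrite oppr0 eqxx.
Qed.

Lemma nov_zero_nov : novikov nov_zero.
Proof.
move=> C; apply: (sub_finite_set (B := set0)); last exact: finite_set0.
by move=> l [] /=; rewrite /nov_zero; case/negP.
Qed.

Lemma nov_val_mone : nov_val (nov_opp nov_one) = 0%E.
Proof.
rewrite /nov_val.
have -> : [set (l%:E) | l in [set l | nov_opp nov_one l != 0]] = [set (0:RR)%:E].
  apply/seteqP; split => e /=.
  - case=> l /=; rewrite /nov_opp /nov_one; case: ifPn => [/eqP -> _ <- //|].
    by rewrite oppr0 eqxx.
  - move=> ->; exists 0 => //; by rewrite /nov_opp /nov_one eqxx oppr_eq0 oner_eq0.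
by rewrite ereal_inf1.
Qed.

Lemma ge_all_pinfty (e : \bar RR) : (forall M : RR, (M%:E <= e)%E) -> e = +oo%E.
Proof.
case: e => [r||] // h.
  by have := h (r + 1); rewrite lee_fin gerDl ler10.
by have := h 0.
Qed.

Lemma archi_bound (v M r : RR) : 0 < v -> exists N : nat, forall k : nat, (N <= k)%N ->
  M <= k%:R * v + r.
Proof.
move=> v0; exists (Num.trunc ((M - r) / v)).+1 => k Nk.
have h1 := truncnS_gt ((M - r) / v).
have h2 : ((M - r) / v) <= k%:R.
  by apply: (le_trans (ltW h1)); rewrite ler_nat.
rewrite -lerBlDr; rewrite ler_pdivrMr // in h2.
Qed.

Theorem lemma3p1 (V : zmodType) (sc : (RR -> rat) -> V -> V) (mul : V -> V -> V)
    (d : V -> V) (hom : bool -> set V) (vA : V -> \bar RR) :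
  cvdga sc mul d hom vA ->
  forall x : V, hom false x -> represents_nonzero_idempotent mul d x ->
  (vA x <= 0%:E)%E.
Proof.
move=> H x hx [cx [nex [y ey]]].
have d0 : d 0 = 0.
  have e := Defs.d_add H 0 0; rewrite addr0 in e.
  by apply: (addrI (d 0)); rewrite addr0 -e.
have dN : forall w, d (- w) = - d w.
  by move=> w; apply: (addrI (d w)); rewrite -(Defs.d_add H) !subrr.
have dB : forall a b, d (a - b) = d a - d b by move=> a b; rewrite (Defs.d_add H) dN.
have mul0l : forall w, mul 0 w = 0.
  move=> w; have e := Defs.mul_addl H 0 0 w; rewrite addr0 in e.
  by apply: (addrI (mul 0 w)); rewrite addr0 -e.
have vAN : forall w, vA (- w) = vA w.
  move=> w.
  have sz : sc nov_zero w = 0.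
    have e := Defs.sc_addl H w nov_zero_nov nov_zero_nov.
    move: e; have -> : nov_add nov_zero nov_zero = nov_zero.
      by apply: funext => l; rewrite /nov_add /nov_zero addr0.
    by move=> e; apply: (addrI (sc nov_zero w)); rewrite addr0 -e.
  have sm : sc (nov_opp nov_one) w = - w.
    apply: (addIr w); rewrite addNr -{2}(Defs.sc_one H w) -(Defs.sc_addl H) //;
      [|exact: nov_mone_nov|exact: nov_one_nov].
    have -> : nov_add (nov_opp nov_one) nov_one = nov_zero.
      by apply: funext => l; rewrite /nov_add /nov_opp /nov_zero addNr.
    exact: sz.
  by rewrite -sm (Defs.vA_sc H) // ?nov_val_mone ?add0e //; exact: nov_mone_nov.
have vAaddM : forall (M : RR) a b, (M%:E <= vA a)%E -> (M%:E <= vA b)%E ->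
    (M%:E <= vA (a + b)%R)%E.
  move=> M a b ha hb; apply: (le_trans _ (Defs.vA_add H a b)).
  by rewrite le_min ha hb.
have vA0 : vA 0 = +oo%E by apply/(Defs.vA_infty H).
have vAsum : forall (M : RR) (m n : nat) (F : nat -> V),
    (forall k, (m <= k)%N -> (M%:E <= vA (F k))%E) ->
    (M%:E <= vA (\sum_(m <= k < n) F k)%R)%E.
  move=> M m n F hF; rewrite big_nat_cond; apply: (big_ind (fun u => (M%:E <= vA u)%E)).
  - by rewrite vA0 leey.
  - exact: vAaddM.
  - by move=> i /andP[/andP[]] mi _ _; exact: hF.
rewrite leNgt; apply/negP => xpos.
have [v [v0 vx]] : exists v : RR, 0 < v /\ (v%:E <= vA x)%E.
  move: xpos; case: (vA x) => [r||] //.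
  - by move=> r0; exists r; split => //; rewrite lte_fin in r0.
  - by move=> _; exists 1; split => //; rewrite leey.
have [r ry] : exists r : RR, (r%:E <= vA y)%E.
  move: (Defs.vA_ninfty H y); case: (vA y) => [r||] //.
  - by move=> _; exists r.
  - by move=> _; exists 0; rewrite leey.
pose L := fun w => mul x w.
have itD : forall n a b, iter n L (a + b) = iter n L a + iter n L b.
  by elim=> [//|n IH] a b; rewrite !iterS IH /L (Defs.mul_addr H).
have itN : forall n a, iter n L (- a) = - iter n L a.
  move=> n a; apply: (addrI (iter n L a)); rewrite -itD !subrr.
  by elim: n => [//|n IH]; rewrite iterS IH /L; have := Defs.mul_addr H x 0 0;
     rewrite addr0 => e; apply: (addrI (mul x 0)); rewrite addr0 -e.
have Ld : forall w, L (d w) = d (L w).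
  move=> w; rewrite /L (Defs.d_leibniz H _ hx) cx mul0l add0r //.
have itd : forall n w, iter n L (d w) = d (iter n L w).
  by elim=> [//|n IH] w; rewrite !iterS IH Ld.
have itv : forall n w, ((n%:R * v)%:E + vA w <= vA (iter n L w))%E.
  elim=> [|n IH] w.
    by rewrite mul0r add0e.
  rewrite iterS; apply: (le_trans _ (Defs.vA_mul H x _)).
  rewrite -[n.+1]addn1 natrD mulrDl mul1r EFinD -addeA [(v%:E + _)%E]addeC addeA.
  by rewrite addeC; apply: leeD.
pose S n := \sum_(0 <= k < n) iter k L y.
have ident : forall n, x = iter n L x - d (S n).
  elim=> [|n IH]; first by rewrite /S big_geq // d0 subr0.
  rewrite {1}IH iterSr.
  have -> : L x = x + d y by rewrite /L -ey addrCA subrr addr0.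
  rewrite itD itd /S big_nat_recr //= (Defs.d_add H) opprD addrA.
  by rewrite addrAC addrK.
have itvy : forall (M : RR), exists N : nat, forall k, (N <= k)%N ->
    (M%:E <= vA (iter k L y))%E.
  move=> M; have [N hN] := archi_bound v M r v0.
  exists N => k Nk; apply: (le_trans _ (itv k y)).
  apply: (le_trans _ (leeD (lexx _) ry)); rewrite -EFinD lee_fin; exact: hN.
have cauchy : forall M : RR, exists N : nat, forall m n : nat, (N <= m)%N -> (N <= n)%N ->
    (M%:E <= vA (S m - S n))%O.
  move=> M; have [N hN] := itvy M; exists N.
  have key : forall m n, (N <= n)%N -> (n <= m)%N -> (M%:E <= vA (S m - S n)%R)%E.
    move=> m n Nn nm; rewrite /S (big_cat_nat (leq0n n) nm) /= addrAC subrr add0r.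
    apply: vAsum => k nk; apply: hN; exact: leq_trans Nn nk.
  move=> m n Nm Nn; case: (leqP n m) => nm; first exact: key.
  by rewrite -vAN opprB; apply: key => //; exact: ltnW.
have [l hl] := Defs.vA_complete H cauchy.
have xl : x + d l = 0.
  apply/(Defs.vA_infty H)/ge_all_pinfty => M.
  have [N1 h1] := hl M.
  have [N2 h2] := archi_bound v M 0 v0.
  pose n := maxn N1 N2.
  have -> : x + d l = iter n L x + d (l - S n).
    by rewrite {1}(ident n) dB -addrA [- d _ + _]addrC.
  apply: vAaddM.
  - apply: (le_trans _ (itv n x)); apply: (le_trans _ (leeD (lexx _) vx)).
    rewrite -EFinD lee_fin; apply: (le_trans (h2 n (leq_maxr _ _))).
    by rewrite addr0 lerDl ltW.
  - apply: (le_trans _ (Defs.vA_d H _)); rewrite -vAN opprB.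
    exact: (h1 n (leq_maxl _ _)).
apply: nex; exists (- l); rewrite dN; apply/eqP; rewrite -addr_eq0; exact/eqP.
Qed.
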